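(* Let $d\geq1$ and fix any $\alpha\in\mathbb{Z}^d$. Then $\big\|d+\sum_{j=1}^d z_j-\varepsilon z^\alpha\big\|_\infty<\big\|d+\sum_{j=1}^d z_j\big\|_\infty$ for every sufficiently small $\varepsilon>0$, where $\|\cdot\|_\infty$ is the supremum norm on $\mathbb{T}^d$.
   Context: $\mathbb{T}^d$ is the $d$-dimensional torus with coordinates $z=(z_1,\dots,z_d)$, and $z^\alpha=z_1^{\alpha_1}\cdots z_d^{\alpha_d}$. *)

(* Defs.v *)
From HB Require Import structures.
From mathcomp Require Import all_boot all_order all_algebra.
From mathcomp Require Import all_classical all_reals.
From mathcomp Require Import complex.
Set Implicit Arguments. Unset Strict Implicit. Unset Printing Implicit Defensive.
Import Order.TTheory GRing.Theory Num.Theory.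
Local Open Scope ring_scope.
Local Open Scope classical_set_scope.

Definition torus (R : realType) (d : nat) : set ('I_d -> R[i]) :=
  [set z | forall j, Normc.normc (z j) = 1].

Definition zmono (R : realType) (d : nat) (alpha : 'I_d -> int)
  (z : 'I_d -> R[i]) : R[i] := \prod_(j < d) (z j) ^ (alpha j).

Definition supnorm (R : realType) (d : nat) (F : ('I_d -> R[i]) -> R[i]) : R :=
  sup [set Normc.normc (F z) | z in @torus R d].

Definition pd (R : realType) (d : nat) (z : 'I_d -> R[i]) : R[i] :=
  d%:R + \sum_(j < d) z j.

(* Main.v *)
Require Import Defs.
From HB Require Import structures.
From mathcomp Require Import all_boot all_order all_algebra.
From mathcomp Require Import all_classical all_reals.
From mathcomp Require Import complex.
From mathcomp Require Import ring lra.
Import Order.TTheory GRing.Theory Num.Theory.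
Local Open Scope ring_scope.

Section H.
Context {R : realType}.
Local Notation nc := (@Normc.normc R).

Lemma nc_real (k : R) : nc ((k%:C)%C) = `|k|.
Proof. by rewrite /Normc.normc /= expr0n addr0 sqrtr_sqr. Qed.

Lemma ncX (z : R[i]) n : nc (z ^+ n) = nc z ^+ n.
Proof.
elim: n => [|n IH]; first by rewrite !expr0 Normc.normc1.
by rewrite !exprS Normc.normcM IH.
Qed.

Lemma ncB (x y : R[i]) : nc (x - y) = nc (y - x).
Proof. by rewrite -normcN opprB. Qed.

Lemma pow_nat (z : R[i]) n : nc z = 1 -> nc (z ^+ n - 1) <= n%:R * nc (z - 1).
Proof.
move=> hz; elim: n => [|n IH]; first by rewrite expr0 subrr Normc.normc0 mul0r.
have -> : z ^+ n.+1 - 1 = z * (z ^+ n - 1) + (z - 1) by rewrite exprS; ring.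
apply: le_trans (le_normcD _ _) _; rewrite Normc.normcM hz mul1r mulrSr mulrDl mul1r.
by rewrite lerD2r.
Qed.

Lemma pow_int (z : R[i]) (k : int) : nc z = 1 ->
  nc (z ^ k) = 1 /\ nc (z ^ k - 1) <= (`|k|%N)%:R * nc (z - 1).
Proof.
move=> hz; case: k => n.
  by split; [rewrite /= ncX hz expr1n | exact: pow_nat].
have hw : nc (z ^+ n.+1) = 1 by rewrite ncX hz expr1n.
have w0 : z ^+ n.+1 != 0.
  by apply/eqP => h; move: hw; rewrite h Normc.normc0 => /eqP; rewrite eq_sym oner_eq0.
have E : z ^ (Negz n) = (z ^+ n.+1)^-1 by [].
rewrite E; split; first by rewrite Normc.normcV hw invr1.
have -> : (z ^+ n.+1)^-1 - 1 = (1 - z ^+ n.+1) * (z ^+ n.+1)^-1.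
  by rewrite mulrBl mul1r mulfV.
rewrite Normc.normcM Normc.normcV hw invr1 mulr1 ncB.
exact: pow_nat.
Qed.

Lemma prod_bound d (F : 'I_d -> R[i]) : (forall j, nc (F j) = 1) ->
  nc (\prod_j F j) = 1 /\ nc (\prod_j F j - 1) <= \sum_j nc (F j - 1).
Proof.
move=> hF.
apply: (big_rec2 (fun p s => nc p = 1 /\ nc (p - 1) <= s)).
  by rewrite subrr Normc.normc0 Normc.normc1.
move=> i y1 y2 _ [h1 h2]; split; first by rewrite Normc.normcM hF h1 mulr1.
have -> : F i * y1 - 1 = F i * (y1 - 1) + (F i - 1) by ring.
apply: le_trans (le_normcD _ _) _; rewrite Normc.normcM hF mul1r [X in _ <= X]addrC lerD2r //.
Qed.

Lemma sum_bound d (F : 'I_d -> R[i]) : nc (\sum_j F j) <= \sum_j nc (F j).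
Proof.
apply: (big_rec2 (fun p s => nc p <= s)); first by rewrite Normc.normc0.
move=> i y1 y2 _ h; apply: le_trans (le_normcD _ _) _; by rewrite lerD2l.
Qed.

Lemma one_plus (z : R[i]) : nc z = 1 -> nc (1 + z) <= 2 - nc (z - 1) ^+ 2 / 4.
Proof.
case: z => a b; rewrite /Normc.normc /= => h.
have h1 : a ^+ 2 + b ^+ 2 = 1.
  by rewrite -(sqr_sqrtr (addr_ge0 (sqr_ge0 a) (sqr_ge0 b))) h expr1n.
rewrite sqr_sqrtr ?addr_ge0 ?sqr_ge0 //.
have e : (a - 1) ^+ 2 + (b - 0) ^+ 2 = 2 - 2 * a by rewrite subr0; nra.
have ha : -1 <= a by nra.
rewrite e; set y := 2 - _.
have y0 : 0 <= y by rewrite /y; lra.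
rewrite -(ger0_norm y0) -sqrtr_sqr ler_sqrt ?sqr_ge0 // /y; nra.
Qed.

End H.

Local Notation nc := (@Normc.normc _).

Theorem lemma2p3 (R : realType) (d : nat) (hd : (1 <= d)%N) (alpha : 'I_d -> int) :
  exists2 e0 : R, 0 < e0 &
    forall eps : R, 0 < eps -> eps < e0 ->
      supnorm (fun z => pd z - (eps%:C)%C * zmono alpha z) < supnorm (@pd R d).
Proof.
set A : R := \sum_j (`|alpha j|%N)%:R.
have A0 : 0 <= A by apply: sumr_ge0 => j _; exact: ler0n.
set del : R := (4 * (A + 1))^-1.
have del0 : 0 < del by rewrite /del invr_gt0; lra.
have Adel : A * del <= 1/4.
  rewrite /del ler_pdivrMr; lra.
have d1 : (1 : R) <= d%:R by rewrite ler1n.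
exists (Num.min (del ^+ 2 / 8) 1).
  by rewrite lt_min; apply/andP; split; [apply: divr_gt0; [exact: exprn_gt0|lra] | lra].
move=> eps e0 ; rewrite lt_min => /andP [e1 e2].
have S1 : forall z : 'I_d -> R[i], (forall j, nc (z j) = 1) ->
    nc (pd z) <= d%:R + d%:R - (\sum_j nc (z j - 1) ^+ 2) / 4.
  move=> z hz.
  have -> : pd z = \sum_j (1 + z j) by rewrite /pd big_split /= sumr_const card_ord.
  apply: le_trans (sum_bound _ _) _.
  apply: le_trans (ler_sum _ (fun j _ => one_plus _ (hz j))) _.
  rewrite sumrB sumr_const card_ord -mulr_suml.
  have -> : (2 : R) *+ d = d%:R + d%:R by rewrite -mulrnA mulnC mulrnA mulr2n.
  by [].
have Sb : forall z : 'I_d -> R[i], (forall j, nc (z j) = 1) ->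
    nc (pd z - (eps%:C)%C * zmono alpha z) <= d%:R + d%:R - eps / 2.
  move=> z hz.
  have [hu1 hu2] := prod_bound _ (fun j => z j ^ alpha j) (fun j => (pow_int _ (alpha j) (hz j)).1).
  set u := zmono alpha z.
  have hu : nc u = 1 by exact: hu1.
  have hu' : nc (u - 1) <= \sum_j (`|alpha j|%N)%:R * nc (z j - 1).
    apply: le_trans hu2 _; apply: ler_sum => j _; exact: (pow_int _ (alpha j) (hz j)).2.
  have ne : nc ((eps%:C)%C) = eps by rewrite nc_real gtr0_norm.
  have sg : 0 <= \sum_j nc (z j - 1) ^+ 2 by apply: sumr_ge0 => j _; exact: sqr_ge0.
  have [big|small] := leP (del ^+ 2) (\sum_j nc (z j - 1) ^+ 2).
    apply: le_trans (le_normcD _ _) _.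
    rewrite normcN Normc.normcM ne hu mulr1.
    have := S1 z hz; lra.
  have nc0 : forall x : R[i], 0 <= nc x by case=> a b; exact: sqrtr_ge0.
  have hs : forall j, nc (z j - 1) < del.
    move=> j.
    have hj : nc (z j - 1) ^+ 2 <= \sum_j nc (z j - 1) ^+ 2.
      rewrite (bigD1 j) //= lerDl; apply: sumr_ge0 => i _; exact: sqr_ge0.
    have := nc0 (z j - 1); nra.
  have hu3 : nc (u - 1) <= A * del.
    apply: le_trans hu' _; rewrite /A mulr_suml; apply: ler_sum => j _.
    by apply: ler_wpM2l; [exact: ler0n | exact: ltW].
  have -> : pd z - (eps%:C)%C * u
      = (((d%:R - eps)%:C)%C + \sum_j z j) - (eps%:C)%C * (u - 1).
    by rewrite /pd rmorphB rmorph_nat /=; ring.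
  have h1 := le_normcD (((d%:R - eps)%:C)%C + \sum_j z j) (- ((eps%:C)%C * (u - 1))).
  rewrite normcN Normc.normcM ne in h1.
  have h2 := le_normcD (((d%:R - eps)%:C)%C) (\sum_j z j).
  have h3 : nc (\sum_j z j) <= d%:R.
    apply: le_trans (sum_bound _ _) _.
    by rewrite (eq_bigr (fun=> 1)) // sumr_const card_ord.
  have h4 : nc (((d%:R - eps)%:C)%C) = d%:R - eps by rewrite nc_real ger0_norm //; lra.
  have h6 : eps * nc (u - 1) <= eps * (A * del) by apply: ler_wpM2l => //; exact: ltW.
  have h7 : eps * (A * del) <= eps * (1 / 4) by apply: ler_wpM2l => //; exact: ltW.
  lra.
pose one := fun _ : 'I_d => (1 : R[i]).
have hone : forall j, nc (one j) = 1 by move=> j; exact: Normc.normc1.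
have up : supnorm (fun z => pd z - (eps%:C)%C * zmono alpha z) <= d%:R + d%:R - eps / 2.
  rewrite /supnorm; apply: ge_sup.
    by exists (nc (pd one - (eps%:C)%C * zmono alpha one)); exists one.
  by move=> _ [z hz <-]; apply: Sb => j; exact: hz j.
have low : d%:R + d%:R <= supnorm (@pd R d).
  rewrite /supnorm; apply: ub_le_sup.
    exists (d%:R + d%:R) => _ [z hz <-].
    have hz' : forall j, nc (z j) = 1 by move=> j; exact: hz j.
    have := S1 z hz'.
    have : 0 <= \sum_j nc (z j - 1) ^+ 2 by apply: sumr_ge0 => j _; exact: sqr_ge0.
    lra.
  exists one => //.
  have -> : pd one = ((d + d)%:R : R)%:C%C.
    by rewrite rmorph_nat /pd /one sumr_const card_ord natrD.
  by rewrite nc_real normr_nat natrD.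
lra.
Qed.
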